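(* For $n\ge1$ and $0\le k\le n-1$, let $a_{n,k}$ be the number of $\pi\in\mathfrak{A}_{2n}(231)$ with $\pi(2n)=n+k+1$. Then $$a_{n,k}=\frac{n-k}{n}\binom{n-1+k}{k}.$$
   Context: $\mathfrak{A}_{2n}(231)$ is the set of permutations $\pi$ of $[2n]$ that are alternating (up-down), i.e. $\pi(1)<\pi(2)>\pi(3)<\cdots>\pi(2n-1)<\pi(2n)$, and avoid the classical pattern $231$. *)

(* Defs.v *)
From HB Require Import structures.
From mathcomp Require Import all_boot all_order all_algebra all_fingroup.
Set Implicit Arguments. Unset Strict Implicit. Unset Printing Implicit Defensive.

(* Permutations of [m] are modelled as s : 'S_m acting on 'I_m = {0,..,m-1};
   the paper's pi corresponds to pi(i) = s(i-1) + 1 (shift by one in both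
   positions and values). *)

(* up-down alternating: pi(1) < pi(2) > pi(3) < ... ; with 0-based positions,
   position i (0-based) ascends to i+1 if i is even, descends if i is odd. *)
Definition alternating (m : nat) (s : 'S_m) : bool :=
  [forall i : 'I_m, forall j : 'I_m, (val j == (val i).+1) ==>
    (if odd (val i) then s j < s i else s i < s j)].

Definition avoids231 (m : nat) (s : 'S_m) : bool :=
  ~~ [exists i : 'I_m, exists j : 'I_m, exists k : 'I_m,
        [&& i < j, j < k, s k < s i & s i < s j]].

(* a_{n,k}: number of pi in A_{2n}(231) with pi(2n) = n+k+1,
   i.e. s(2n-1) = n+k in 0-based terms *)
Definition a_nk (n k : nat) : nat :=
  #|[set s : 'S_(n.*2) | [&& alternating s, avoids231 s &
      [exists l : 'I_(n.*2), (val l == n.*2.-1) && (val (s l) == n + k)]] ]|.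

(* Main.v *)
Require Import Defs.
From mathcomp Require Import all_boot all_order all_algebra all_fingroup.
From mathcomp Require Import zify.
Set Implicit Arguments. Unset Strict Implicit. Unset Printing Implicit Defensive.


Definition altP (l : seq nat) := forall i, i.+1 < size l ->
  if odd i then nth 0 l i.+1 < nth 0 l i else nth 0 l i < nth 0 l i.+1.
Definition avP (l : seq nat) := forall i j k, i < j -> j < k -> k < size l ->
  ~ (nth 0 l k < nth 0 l i /\ nth 0 l i < nth 0 l j).
Definition validL m l := [/\ uniq l, size l = m, all (fun x => x < m) l, altP l & avP l].
Definition join (a b : seq nat) := a ++ (size a + size b) :: map (addn (size a)) b.

Lemma size_join (a b : seq nat) : size (join a b) = (size a + size b).+1.
Proof. by rewrite /join size_cat /= size_map; lia. Qed.

Lemma nth_join (a b : seq nat) i : i < (size a + size b).+1 ->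
  nth 0 (join a b) i = if i < size a then nth 0 a i else
     if i == size a then size a + size b else size a + nth 0 b (i - (size a).+1).
Proof.
move=> hi; rewrite /join nth_cat; case: ltnP => // h.
case: eqP => [->|ne]; first by rewrite subnn.
have -> : i - size a = (i - (size a).+1).+1 by lia.
by rewrite /= (nth_map 0) //; lia.
Qed.

Lemma validL_nth m (l : seq nat) i : validL m l -> i < m -> nth 0 l i < m.
Proof. by case=> _ hs /allP ha _ _ hi; apply: ha; apply: mem_nth; rewrite hs. Qed.

Lemma join_valid (a b : seq nat) : odd (size a) -> validL (size a) a -> validL (size b) b ->
  validL (size a + size b).+1 (join a b).
Proof.
move=> oa va vb; have va' := va; have vb' := vb.
case: va' => ua _ aa alta ava; case: vb' => ub _ ab altb avb.
have nA : forall i, i < (size a) -> nth 0 a i < (size a) by move=> i; apply: validL_nth.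
have nB : forall i, i < (size b) -> nth 0 b i < (size b) by move=> i; apply: validL_nth.
split.
- rewrite /join cat_uniq ua /= (map_inj_uniq (@addnI (size a))) ub.
  rewrite andbT negb_or -andbA; apply/and3P; split.
  - by apply/negP => /(allP aa) /=; lia.
  - apply/hasPn => z /mapP [y yb ->]; apply/negP=> /(allP aa) /=; lia.
  - apply/negP=> /mapP [y yb]; move/(allP ab): yb => /=; lia.
- exact: size_join.
- apply/allP => x /=; rewrite /join mem_cat => /orP [/(allP aa) /=|]; first lia.
  rewrite inE => /orP [/eqP ->|/mapP [y /(allP ab) /= yb ->]]; lia.
- move=> i; rewrite size_join => hi.
  rewrite !nth_join //; last lia.
  case: (ltnP i.+1 (size a)) => h1.
    have -> : i < (size a) by lia. by apply: alta.
  case: (ltnP i (size a)) => h2.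
    have ei : i.+1 = (size a) by lia.
    have oi : odd i = false by move: oa; rewrite -/(size a) -ei /=; case: (odd i).
    rewrite oi ei eqxx; have := nA i h2; lia.
  case: (eqVneq i (size a)) => [ei|ne].
    rewrite ei oa (_ : (size a).+1 == (size a) = false); last lia.
    rewrite subnn; have := nB 0; lia.
  have -> : (i.+1 == (size a)) = false by lia.
  have -> : i.+1 - (size a).+1 = (i - (size a).+1).+1 by lia.
  have oi : odd i = odd (i - (size a).+1).
    have -> : i = (i - (size a).+1) + (size a).+1 by lia.
    by rewrite addnK oddD /= oa; case: (odd _).
  rewrite oi; have := altb (i - (size a).+1); case: (odd _); lia.
- move=> i j k hij hjk; rewrite size_join => hk.
  rewrite !nth_join; try lia.
  case: (ltnP k (size a)) => hkp.
    have -> : i < (size a) by lia. have -> : j < (size a) by lia.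
    by apply: ava.
  case: (eqVneq k (size a)) => [ek|nek].
    have -> : i < (size a) by lia. have := nA i; lia.
  have := nB (k - (size a).+1); have := nB (j - (size a).+1); have := nB (i - (size a).+1).
  case: (ltnP i (size a)) => hip.
    have := nA i hip; lia.
  have -> : (j < (size a)) = false by lia. have -> : (j == (size a)) = false by lia.
  case: (eqVneq i (size a)) => [ei|nei]; first by lia.
  move=> _ _ _ [h1 h2]; apply: (avb (i - (size a).+1) (j - (size a).+1) (k - (size a).+1)); try lia.
Qed.


Lemma join_alt_inv (a b : seq nat) : odd (size a) -> altP (join a b) -> altP a /\ altP b.
Proof.
move=> oa h; split.
  move=> i hi; have := h i; rewrite size_join !nth_join; try lia.
  by rewrite hi (_ : i < size a); [apply; lia|lia].
move=> i hi; have := h (i + (size a).+1); rewrite size_join !nth_join; try lia.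
rewrite (_ : (i + (size a).+1 < size a) = false); last lia.
rewrite (_ : (i + (size a).+1).+1 < size a = false); last lia.
rewrite (_ : (i + (size a).+1 == size a) = false); last lia.
rewrite (_ : ((i + (size a).+1).+1 == size a) = false); last lia.
rewrite addnK (_ : (i + (size a).+1).+1 - (size a).+1 = i.+1); last lia.
rewrite oddD /= oa /=; case: (odd i) => /=; move/(_ ltac:(lia)); lia.
Qed.

Lemma join_av_inv (a b : seq nat) : avP (join a b) -> avP a /\ avP b.
Proof.
move=> h; split.
  move=> i j k hij hjk hk; have := h i j k hij hjk; rewrite size_join !nth_join; try lia.
  have -> : i < size a by lia. have -> : j < size a by lia. have -> : k < size a by lia.
  by apply; lia.
move=> i j k hij hjk hk.
have := h (i + (size a).+1) (j + (size a).+1) (k + (size a).+1).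
rewrite size_join !nth_join; try lia.
rewrite (_ : (i + (size a).+1 < size a) = false); last lia.
rewrite (_ : (j + (size a).+1 < size a) = false); last lia.
rewrite (_ : (k + (size a).+1 < size a) = false); last lia.
rewrite (_ : (i + (size a).+1 == size a) = false); last lia.
rewrite (_ : (j + (size a).+1 == size a) = false); last lia.
rewrite (_ : (k + (size a).+1 == size a) = false); last lia.
rewrite !addnK => /(_ ltac:(lia) ltac:(lia) ltac:(lia)) H [h1 h2]; apply: H; lia.
Qed.

Lemma cover (l : seq nat) m v : uniq l -> size l = m -> all (fun x => x < m) l -> v < m -> v \in l.
Proof.
move=> ul sl al vm; apply/negPn/negP => vl.
have : size l <= size (rem v (iota 0 m)).
  apply: uniq_leq_size => // y yl; rewrite (rem_filter _ (iota_uniq 0 m)) mem_filter.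
  rewrite mem_iota /= (allP al) // andbT; apply/negP=> /eqP e; by move: vl; rewrite -e yl.
rewrite size_rem ?mem_iota ?size_iota; lia.
Qed.


Lemma decomp m (l : seq nat) : validL m l -> 1 < m ->
  exists a b, [/\ l = join a b, odd (size a), validL (size a) a & validL (size b) b].
Proof.
case=> ul sl al altl avl m2.
have lt_m : forall i, i < m -> nth 0 l i < m.
  by move=> i im; apply: (allP al); apply: mem_nth; rewrite sl.
have [p pm lp] : exists2 p, p < m & nth 0 l p = m.-1.
  have xl : m.-1 \in l by apply: (cover ul sl al); lia.
  by exists (index (m.-1) l); [rewrite -[X in _ < X]sl index_mem | rewrite nth_index].
have neq : forall i j, i < m -> j < m -> i != j -> nth 0 l i != nth 0 l j.
  by move=> i j im jm; rewrite nth_uniq ?sl.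
have ltx : forall i, i < m -> i != p -> nth 0 l i < m.-1.
  move=> i im ne; have := lt_m i im; have := neq i p im pm ne; rewrite lp; lia.
have po : odd p.
  case: (boolP (odd p)) => // pe.
  case: (ltnP p.+1 m) => h.
    have := altl p; rewrite sl (negbTE pe) lp => /(_ h).
    have := ltx p.+1 h; rewrite (_ : p.+1 != p); [lia|lia].
  have pp : 0 < p by lia.
  have := altl p.-1; rewrite sl prednK // => /(_ pm).
  have -> : odd p.-1 by move: pe; rewrite -{1}(prednK pp) /=; case: (odd _).
  rewrite lp; have := ltx p.-1; rewrite (_ : p.-1 != p); [lia|lia].
have alc : forall i k, i < p -> p < k -> k < m -> nth 0 l i < nth 0 l k.
  move=> i k ip pk km; have := avl i p k ip pk; rewrite sl => /(_ km).
  have := ltx i; have := neq i k; rewrite lp; rewrite (_ : i != p); last lia.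
  rewrite (_ : i != k); last lia.
  move=> /(_ ltac:(lia) km isT) /eqP h1 /(_ ltac:(lia) isT) h2 h3; lia.
have av : forall i, i < p -> nth 0 l i < p.
  move=> i ip; rewrite ltnNge; apply/negP => py.
  have sub : {subset iota 0 (nth 0 l i).+1 <= take p l}.
    move=> w; rewrite mem_iota => /andP [_ wy].
    have wl : w \in l by apply: (cover ul sl al); have := lt_m i; lia.
    have jm : index w l < m by rewrite -sl index_mem.
    have ew := nth_index 0 wl.
    have jp : index w l < p.
      case: (ltngtP (index w l) p) => // h.
        by have := alc i (index w l) ip h jm; rewrite ew; lia.
      by move: ew; rewrite h lp; have := ltx i; rewrite (_ : i != p); [lia|lia].
    by rewrite -ew -(nth_take 0 jp); apply: mem_nth; rewrite size_take sl pm.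
  have := uniq_leq_size (iota_uniq 0 _) sub; rewrite size_iota size_take sl pm; lia.
have alla : all (fun x => x < p) (take p l).
  apply/allP => y /(nthP 0) [i]; rewrite size_take sl pm => ip <-.
  by rewrite nth_take //; apply: av.
have cv : forall k, p < k -> k < m -> p <= nth 0 l k.
  move=> k pk km; rewrite leqNgt; apply/negP => zp.
  have : nth 0 l k \in take p l.
    by apply: (cover (take_uniq _ ul) _ alla zp); rewrite size_take sl pm.
  case/(nthP 0) => i; rewrite size_take sl pm => ip; rewrite nth_take // => e.
  by have := alc i k ip pk km; rewrite e ltnn.
exists (take p l), (map (subn^~ p) (drop p.+1 l)).
have sa : size (take p l) = p by rewrite size_take sl pm.
have sb : size (map (subn^~ p) (drop p.+1 l)) = m - p.+1 by rewrite size_map size_drop sl.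
have lj : l = join (take p l) (map (subn^~ p) (drop p.+1 l)).
  apply: (@eq_from_nth _ 0); first by rewrite size_join sa sb sl; lia.
  move=> i; rewrite sl => im; rewrite nth_join sa sb; last lia.
  case: (ltnP i p) => ip; first by rewrite nth_take.
  case: (eqVneq i p) => [->|nip]; first by rewrite lp; lia.
  rewrite (nth_map 0); last by rewrite size_drop sl; lia.
  rewrite nth_drop (_ : p.+1 + (i - p.+1) = i); last lia.
  have := cv i; lia.
have oa : odd (size (take p l)) by rewrite sa.
split; [exact: lj | by rewrite sa | |].
- move: ul; rewrite {1}lj /join cat_uniq => /and3P [ua _ _]; split => //.
  by rewrite sa.
  by move: altl; rewrite {1}lj => /(join_alt_inv oa) [].
  by move: avl; rewrite {1}lj => /join_av_inv [].
- split.
  + rewrite map_inj_in_uniq; first exact: drop_uniq.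
    move=> u v /(nthP 0) [k1 k1s <-] /(nthP 0) [k2 k2s <-].
    move: k1s k2s; rewrite size_drop sl !nth_drop => k1s k2s.
    have := cv (p.+1 + k1); have := cv (p.+1 + k2); rewrite /=; lia.
  + done.
  + apply/allP => y /mapP [z /(nthP 0) [k]]; rewrite size_drop sl nth_drop => ks <- ->.
    rewrite /= sb; have := cv (p.+1 + k); have := ltx (p.+1 + k); rewrite (_ : p.+1 + k != p); lia.
  + by move: altl; rewrite {1}lj => /(join_alt_inv oa) [].
  + by move: avl; rewrite {1}lj => /join_av_inv [].
Qed.


Lemma join_inj (a b a' b' : seq nat) : all (fun x => x < size a) a ->
  all (fun x => x < size a') a' -> join a b = join a' b' -> a = a' /\ b = b'.
Proof.
move=> aa aa' e.
have ss : size a + size b = size a' + size b'.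
  by have := congr1 size e; rewrite !size_join => -[].
have ix : forall (u v : seq nat), all (fun x => x < size u) u ->
    index (size u + size v) (join u v) = size u.
  move=> u v au; rewrite /join index_cat.
  have -> : (size u + size v \in u) = false.
    by apply/negP => /(allP au) /=; lia.
  by rewrite /= eqxx addn0.
have sa : size a = size a' by rewrite -(ix a b aa) -(ix a' b' aa') e ss.
move: e; rewrite /join => /eqP; rewrite eqseq_cat // => /andP [/eqP -> /eqP [_]].
by move=> /(inj_map (@addnI _)) ->.
Qed.

Fixpoint genf (f m : nat) : seq (seq nat) :=
  if f is f'.+1 then
    if m is m'.+1 then
      if m' is m''.+1 then
        [seq join a b | a <- flatten [seq genf f' j.*2.+1 | j <- iota 0 m./2],
                        b <- genf f' (m' - size a)]
      else [:: [:: 0]]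
    else [:: [::]]
  else [::].

Definition gen m := genf m.+1 m.

Lemma validL_size m l : validL m l -> size l = m. Proof. by case. Qed.

Lemma genfE f m : genf f.+1 m.+2 =
  [seq join a b | a <- flatten [seq genf f j.*2.+1 | j <- iota 0 (m.+2)./2],
                  b <- genf f (m.+1 - size a)].
Proof. by []. Qed.

Lemma genf_spec f : forall m l, m < f -> (l \in genf f m <-> validL m l).
Proof.
elim: f => [//|f IH] m l mf.
case: m mf => [|[|m]] mf; [rewrite /=|rewrite /=|rewrite genfE].
- rewrite inE; split.
    move/eqP => ->; split => //; by move=> *.
  by case=> _ /size0nil ->.
- rewrite inE; split.
    move/eqP => ->; split => //; move=> i j k /=; lia.
  case=> _; case: l => [|y [|z t]] //= _ /andP [y1 _] _ _.
  by rewrite (_ : y = 0) //; lia.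
- split.
  + case/allpairsPdep => a [b [/flattenP [s /mapP [j]]]].
    rewrite mem_iota => /andP [_ jm] -> ain bin ->.
    have va : validL j.*2.+1 a.
      apply/(IH _ _ _).1 => //; rewrite -[X in _ < X]odd_double_half in jm; lia.
    have sa := validL_size va.
    have vb : validL (m.+1 - size a) b by apply/(IH _ _ _).1 => //; lia.
    have sb := validL_size vb.
    have oa : odd (size a) by rewrite sa /= odd_double.
    have va' : validL (size a) a by rewrite sa.
    have vb' : validL (size b) b by rewrite sb.
    have := join_valid oa va' vb'.
    rewrite -[X in _ < X]odd_double_half in jm.
    by rewrite (_ : (size a + size b).+1 = m.+2) //; lia.
  + move=> vl; have sl := validL_size vl.
    have [a [b [el oa va vb]]] := decomp vl isT.
    rewrite el size_join in sl; rewrite el.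
    apply/allpairsPdep; exists a, b; split => //.
      apply/flattenP; exists (genf f (size a)).
        apply/mapP; exists (size a)./2.
          rewrite mem_iota /=. rewrite -[X in _ < X]odd_double_half.
          have := odd_double_half (size a); rewrite oa; lia.
        by rewrite -[in LHS](odd_double_half (size a)) oa.
      by apply/(IH _ _ _).2 => //; lia.
    by apply/(IH _ _ _).2; rewrite (_ : m.+1 - size a = size b) //; lia.
Qed.


Lemma allpairs_flat (S R : Type) (T : Type) (f : S -> T -> R) (s : seq S) (t : S -> seq T) :
  [seq f x y | x <- s, y <- t x] = flatten [seq [seq f x y | y <- t x] | x <- s].
Proof. by elim: s => //= x s ->. Qed.

Lemma genf_fuel f1 : forall f2 m, m < f1 -> m < f2 -> genf f1 m = genf f2 m.
Proof.
elim: f1 => [//|f IH] [//|g] [|[|m]] h1 h2 //.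
rewrite !genfE.
have -> : [seq genf f j.*2.+1 | j <- iota 0 (m.+2)./2] =
          [seq genf g j.*2.+1 | j <- iota 0 (m.+2)./2].
  apply/eq_in_map => j; rewrite mem_iota => /andP [_ jm].
  rewrite -[X in _ < X]odd_double_half in jm.
  by apply: IH; lia.
by apply: eq_allpairsr => a; apply: IH; lia.
Qed.

Lemma gen_rec m : gen m.+2 = [seq join a b | a <- flatten [seq gen j.*2.+1 | j <- iota 0 (m.+2)./2],
                  b <- gen (m.+1 - size a)].
Proof.
rewrite /gen genfE.
have -> : [seq genf m.+2 j.*2.+1 | j <- iota 0 (m.+2)./2] =
          [seq genf j.*2.+2 j.*2.+1 | j <- iota 0 (m.+2)./2].
  apply/eq_in_map => j; rewrite mem_iota => /andP [_ jm].
  rewrite -[X in _ < X]odd_double_half in jm.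
  by apply: genf_fuel; lia.
by apply: eq_allpairsr => a; apply: genf_fuel; lia.
Qed.

Lemma gen_spec m l : l \in gen m <-> validL m l.
Proof. exact: genf_spec. Qed.

Lemma uniq_flatten_map (S T : eqType) (F : S -> seq T) (s : seq S) : uniq s ->
  {in s, forall x, uniq (F x)} ->
  {in s &, forall x y z, z \in F x -> z \in F y -> x = y} -> uniq (flatten (map F s)).
Proof.
elim: s => //= x s IH /andP [xs us] uF dF.
rewrite cat_uniq uF ?inE ?eqxx // IH //; last first.
- by move=> y z ys zs; apply: dF; apply: mem_behead.
- by move=> y ys; apply: uF; apply: mem_behead.
rewrite andbT; apply/hasPn => z /flattenP [t /mapP [y ys ->]] zy.
apply/negP => zx; have e := dF x y (mem_head _ _) (@mem_behead _ (x :: s) _ ys) z zx zy.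
by move: xs; rewrite e ys.
Qed.

Lemma join_injr (a : seq nat) : injective (join a).
Proof.
move=> b b'; rewrite /join => /eqP; rewrite eqseq_cat // => /andP [_ /eqP [_ e]].
by move: e => /(inj_map (@addnI _)).
Qed.

Lemma inA m a : a \in flatten [seq gen j.*2.+1 | j <- iota 0 m] ->
  exists2 j, j < m & validL j.*2.+1 a.
Proof.
case/flattenP => s /mapP [j]; rewrite mem_iota => /andP [_ jm] -> /gen_spec.
by exists j.
Qed.

Lemma gen_uniq m : uniq (gen m).
Proof.
elim: m {-2}m (leqnn m) => [|n IH] [|[|m]] // mn.
rewrite gen_rec allpairs_flat; apply: uniq_flatten_map.
- apply: uniq_flatten_map; first exact: iota_uniq.
    move=> j; rewrite mem_iota => /andP [_ jm]; apply: IH.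
    rewrite -[X in _ < X]odd_double_half in jm; lia.
  move=> j1 j2 _ _ z /gen_spec /validL_size h1 /gen_spec /validL_size h2.
  by move: h1; rewrite h2 => /eqP; rewrite eqSS -!muln2 eqn_pmul2r // => /eqP.
- move=> a /inA [j jm va].
  rewrite (map_inj_uniq (@join_injr a)); apply: IH.
  rewrite -[X in _ < X]odd_double_half in jm; lia.
- move=> a a' /inA [j _ [_ sa aa _ _]] /inA [j' _ [_ sa' aa' _ _]] z.
  case/mapP => b _ -> /mapP [b' _] /join_inj.
  by rewrite sa sa' => /(_ aa aa') [].
Qed.


Definition tot m := size (gen m).
Definition Lc m v := count (fun l => last m l == v) (gen m).

Lemma count_flat_map (S T : Type) (P : pred T) (F : S -> seq T) (s : seq S) :
  count P (flatten (map F s)) = \sum_(x <- s) count P (F x).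
Proof. by elim: s => [|x s IH]; rewrite ?big_nil ?big_cons //= count_cat IH. Qed.

Lemma sum_const_seq (S : Type) (s : seq S) c : \sum_(x <- s) c = size s * c.
Proof. by elim: s => [|x s IH]; rewrite ?big_nil ?big_cons //= IH mulSn. Qed.

Lemma iota_ord K (F : nat -> nat) : \sum_(j <- iota 0 K) F j = \sum_(j < K) F j.
Proof. have -> : iota 0 K = index_iota 0 K by rewrite /index_iota subn0. exact: big_mkord. Qed.

Lemma count_gen_rec m (P : pred (seq nat)) : count P (gen m.+2) =
  \sum_(j < (m.+2)./2) \sum_(a <- gen j.*2.+1)
     count (fun b => P (join a b)) (gen (m.+1 - j.*2.+1)).
Proof.
rewrite gen_rec allpairs_flat count_flat_map big_flatten big_map iota_ord.
apply: eq_bigr => j _; apply: eq_big_seq => a /gen_spec /validL_size ->.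
by rewrite count_map.
Qed.

Lemma tot_rec m : tot m.+2 =
  \sum_(j < (m.+2)./2) tot j.*2.+1 * tot (m.+1 - j.*2.+1).
Proof.
rewrite /tot -(count_predT (gen m.+2)) count_gen_rec.
apply: eq_bigr => j _; rewrite -sum_const_seq; apply: eq_bigr => a _.
by rewrite count_predT.
Qed.

Lemma last_join x (a b : seq nat) : last x (join a b) = size a + last (size b) b.
Proof. by rewrite /join last_cat /= last_map. Qed.

Lemma Lc_rec m (v : nat) : Lc m.+2 v =
  \sum_(j < (m.+2)./2) tot j.*2.+1 *
     (if j.*2.+1 <= v then Lc (m.+1 - j.*2.+1) (v - j.*2.+1) else 0).
Proof.
rewrite /Lc count_gen_rec.
apply: eq_bigr => j _; rewrite -sum_const_seq; apply: eq_big_seq => a /gen_spec va.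
have sa := validL_size va.
rewrite -sa.
have -> : count (fun b => last m.+2 (join a b) == v) (gen (m.+1 - size a)) =
          count (fun b => size a + last (m.+1 - size a) b == v) (gen (m.+1 - size a)).
  apply: eq_in_count => b /gen_spec vb; have sb := validL_size vb.
  by rewrite last_join sb.
case: leqP => h.
  apply: eq_count => y /=; move: (last (m.+1 - size a) y) => w; move: (size a) h => p h; apply/eqP/eqP; lia.
rewrite (@eq_count _ _ xpred0) ?count_pred0 // => y /=; move: (last (m.+1 - size a) y) => w; move: (size a) h => p h; apply/eqP; lia.
Qed.



Fixpoint G (c : nat -> nat) (n r : nat) : nat :=
  if r is r'.+1 then \sum_(j < n) c j * G c (n - j.+1) r' else (n == 0).

Lemma G_big (c : nat -> nat) r : forall n, n < r -> G c n r = 0.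
Proof.
elim: r => [//|r IH] n nr /=.
by apply: big1 => j _; rewrite IH ?muln0 //; have := ltn_ord j; lia.
Qed.

Lemma G_pascal (c : nat -> nat) (c0 : c 0 = 1) (cS : forall i, c i.+1 = \sum_(j < i.+1) c j * c (i - j)) r : forall n, G c n r.+1 = G c n r.+2 + (if n is n'.+1 then G c n' r else 0).
Proof.
elim: r => [|r IH] n.
  case: n => [|n]; first by rewrite /= !big_ord0.
  rewrite /G -/G big_ord_recr /= subnn eqxx muln1.
  rewrite (eq_bigr (fun j => 0)); last first.
    by move=> j _; rewrite (_ : (n.+1 - j.+1 == 0) = false) ?muln0 //; have := ltn_ord j; lia.
  rewrite big1_eq add0n.
  rewrite big_ord_recr /= subnn big_ord0 muln0 addn0.
  case: n => [|n]; first by rewrite big_ord0 c0.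
  rewrite eqn0Ngt ltn0Sn addn0 cS; apply: eq_bigr => i _; congr (_ * _).
  have -> : n.+2 - (widen_ord (leqnSn n.+1) i).+1 = (n - i).+1 by rewrite /=; have := ltn_ord i; lia.
  rewrite big_ord_recr /= subnn eqxx muln1 big1 ?add0n // => j _.
  rewrite (_ : _ == 0 = false) ?muln0 //.
  by have := ltn_ord j; have := ltn_ord i; lia.
have -> : G c n r.+2 = \sum_(j < n) c j * G c (n - j.+1) r.+1 by [].
have -> : G c n r.+3 = \sum_(j < n) c j * G c (n - j.+1) r.+2 by [].
rewrite (eq_bigr (fun j : 'I_n => c j * G c (n - j.+1) r.+2 +
   c j * (if n - j.+1 is m'.+1 then G c m' r else 0))); last by move=> j _; rewrite IH mulnDr.
rewrite big_split /=; congr (_ + _).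
case: n => [|n]; first by rewrite big_ord0.
rewrite big_ord_recr /= subnn muln0 addn0.
apply: eq_bigr => j _.
by rewrite (_ : n.+1 - j.+1 = (n - j.+1).+1) //; have := ltn_ord j; lia.
Qed.

Lemma G_nn (c : nat -> nat) (c0 : c 0 = 1) n : G c n n = 1.
Proof.
elim: n => [//|n IH].
have -> : G c n.+1 n.+1 = \sum_(j < n.+1) c j * G c (n.+1 - j.+1) n by [].
rewrite big_ord_recl /= subSS subn0 IH c0 muln1 big1 ?addn0 // => j _.
by rewrite G_big ?muln0 // /bump /=; have := ltn_ord j; lia.
Qed.

Lemma G_diff (c : nat -> nat) (c0 : c 0 = 1) (cS : forall i, c i.+1 = \sum_(j < i.+1) c j * c (i - j)) k : forall r, 0 < r ->
  G c (r + k.+1) r + 'C(r + k.*2.+1, k) = 'C(r + k.*2.+1, k.+1).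
Proof.
elim: k => [|k IHk] r.
- elim: r => [//|r IHr] _.
  rewrite addn1 (G_pascal c0 cS) (G_nn c0) bin0 bin1.
  case: r IHr => [|r] IHr; first by [].
  have := IHr isT; rewrite addn1 bin0 bin1; lia.
- elim: r => [//|r IHr] _.
  rewrite addSn (G_pascal c0 cS).
  have h1 := IHk r.+2 isT.
  have -> : (r + k.+2).+1 = r.+2 + k.+1 by lia.
  have e1 : r.+2 + k.*2.+1 = r + k.*2.+3 by lia.
  have e2 : r.+1 + k.+1.*2.+1 = (r + k.*2.+3).+1 by rewrite doubleS; lia.
  rewrite e1 in h1; rewrite e2 !binS.
  case: r IHr h1 e1 e2 => [|r] IHr h1 e1 e2.
    have -> : G c (0 + k.+2) 0 = 0 by [].
    have := bin_sub (n := 0 + k.*2.+3) (m := k.+1) ltac:(lia).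
    rewrite (_ : 0 + k.*2.+3 - k.+1 = k.+2); last lia.
    lia.
  have h2 := IHr isT.
  have e3 : r.+1 + k.+1.*2.+1 = r.+1 + k.*2.+3 by rewrite doubleS; lia.
  rewrite e3 in h2.
  lia.
Qed.



Definition cc i := tot i.*2.+1.

Lemma half3 i : (i.*2.+3)./2 = i.+1.
Proof. by elim: i => // i IH; rewrite doubleS /= -IH. Qed.

Lemma cc0 : cc 0 = 1. Proof. by []. Qed.

Lemma ccS i : cc i.+1 = \sum_(j < i.+1) cc j * cc (i - j).
Proof.
rewrite /cc doubleS tot_rec half3; apply: eq_bigr => j _.
by rewrite (_ : i.*2.+2 - j.*2.+1 = (i - j).*2.+1) //; have := ltn_ord j; lia.
Qed.

Lemma half2 n : (n.*2.+2)./2 = n.+1.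
Proof. by elim: n => // n IH; rewrite doubleS /= -IH. Qed.

Lemma Lc_even n v : Lc n.+1.*2 v = \sum_(j < n.+1) cc j *
  (if j.*2.+1 <= v then Lc (n - j).*2 (v - j.*2.+1) else 0).
Proof.
rewrite doubleS Lc_rec half2; apply: eq_bigr => j _.
by rewrite (_ : n.*2.+1 - j.*2.+1 = (n - j).*2) //; have := ltn_ord j; lia.
Qed.

Lemma EG N : forall n v, n <= N ->
  Lc n.*2 v = if v <= n.*2 then G cc n (n.*2 - v) else 0.
Proof.
elim: N => [|N IH] n v hn.
  rewrite (_ : n = 0) /=; last lia.
  by rewrite /Lc /=; case: v.
case: n hn => [|n] hn.
  by rewrite /Lc /=; case: v.
rewrite Lc_even.
case: (leqP v n.*2.+1) => hv.
  rewrite (_ : v <= n.+1.*2); last by rewrite doubleS; lia.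
  rewrite (_ : n.+1.*2 - v = (n.*2.+1 - v).+1); last by rewrite doubleS; lia.
  have -> : G cc n.+1 (n.*2.+1 - v).+1 =
     \sum_(j < n.+1) cc j * G cc (n.+1 - j.+1) (n.*2.+1 - v) by [].
  apply: eq_bigr => j _; have jn := ltn_ord j; rewrite subSS.
  case: (leqP j.*2.+1 v) => hj.
    rewrite IH; last lia.
    rewrite (_ : v - j.*2.+1 <= (n - j).*2); last lia.
    by rewrite (_ : (n - j).*2 - (v - j.*2.+1) = n.*2.+1 - v) //; lia.
  by rewrite G_big ?muln0 //; lia.
rewrite big1; last first.
  move=> j _; have jn := ltn_ord j.
  rewrite (_ : j.*2.+1 <= v); last lia.
  rewrite IH; last lia.
  by rewrite (_ : v - j.*2.+1 <= (n - j).*2 = false) ?muln0 //; lia.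
case: ifP => // _; rewrite (_ : n.+1.*2 - v = 0) //; rewrite doubleS; lia.
Qed.


Lemma a_closed n k : 0 < n -> k <= n - 1 ->
  Lc n.*2 (n + k) * n = (n - k) * 'C(n - 1 + k, k).
Proof.
move=> hn hk; rewrite (@EG n) // (_ : n + k <= n.*2); last lia.
rewrite (_ : n.*2 - (n + k) = n - k); last lia.
case: k hk => [|k] hk.
  by rewrite subn0 (G_nn cc0) bin0; lia.
have [r er] : exists r, n = r + k.+1 by exists (n - k.+1); lia.
rewrite er (_ : r + k.+1 - k.+1 = r); last lia.
rewrite (_ : r + k.+1 - 1 + k.+1 = r + k.*2.+1); last lia.
have h1 := G_diff cc0 ccS k (r := r) ltac:(lia).
have h2 := mul_bin_left (r + k.*2.+1) k.
rewrite (_ : r + k.*2.+1 - k = r + k.+1) in h2; last lia.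
move: h1 h2; move: (G cc (r + k.+1) r) ('C(r + k.*2.+1, k)) ('C(r + k.*2.+1, k.+1)) => g c0 c1.
nia.
Qed.


Definition lst m (s : 'S_m) : seq nat := map (fun i => val (s i)) (enum 'I_m).

Lemma size_lst m (s : 'S_m) : size (lst s) = m.
Proof. by rewrite size_map size_enum_ord. Qed.

Lemma nth_lst m (s : 'S_m) (i : 'I_m) : nth 0 (lst s) i = s i.
Proof. by rewrite /lst (nth_map i) ?size_enum_ord // nth_ord_enum. Qed.

Lemma lst_inj m : injective (@lst m).
Proof.
move=> s t e; apply/permP => i; apply/val_inj => /=.
by rewrite -(nth_lst s i) -(nth_lst t i) e.
Qed.

Lemma alt_iff m (s : 'S_m) : alternating s <-> altP (lst s).
Proof.
rewrite /altP size_lst; split.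
  move/forallP => H i hi.
  have im : i < m by lia.
  have := forallP (H (Ordinal im)) (Ordinal hi); rewrite /= eqxx /=.
  by rewrite -(nth_lst s (Ordinal im)) -(nth_lst s (Ordinal hi)).
move=> H; apply/forallP => i; apply/forallP => j; apply/implyP => /eqP hj.
have := H i; rewrite -hj => /(_ (ltn_ord j)).
by rewrite (nth_lst s i) (nth_lst s j).
Qed.

Lemma av_iff m (s : 'S_m) : avoids231 s <-> avP (lst s).
Proof.
rewrite /avP size_lst; split.
  move/existsPn => H i j k ij jk km [h1 h2].
  have jm : j < m by lia. have im : i < m by lia.
  have := H (Ordinal im); move/existsPn/(_ (Ordinal jm))/existsPn/(_ (Ordinal km)).
  by rewrite /= ij jk -(nth_lst s (Ordinal im)) -(nth_lst s (Ordinal jm)) -(nth_lst s (Ordinal km)) /= h1 h2.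
move=> H; apply/existsPn => i; apply/existsPn => j; apply/existsPn => k.
apply/negP => /and4P [ij jk h1 h2].
apply: (H i j k ij jk (ltn_ord k)).
by rewrite (nth_lst s i) (nth_lst s j) (nth_lst s k) h1 h2.
Qed.

Lemma valid_lst m (s : 'S_m) : alternating s -> avoids231 s -> validL m (lst s).
Proof.
move=> ha hv; split.
- rewrite map_inj_uniq ?enum_uniq // => i j /val_inj; exact: perm_inj.
- exact: size_lst.
- by apply/allP => x /mapP [i _ ->] /=.
- exact/alt_iff.
- exact/av_iff.
Qed.

Lemma valid_ex m l : validL m l -> exists s : 'S_m, lst s = l.
Proof.
case=> ul sl al _ _.
have lt : forall i : 'I_m, nth 0 l i < m.
  by move=> i; apply: (allP al); apply: mem_nth; rewrite sl.
have finj : injective (fun i : 'I_m => Ordinal (lt i)).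
  move=> i j /(congr1 val) /= /eqP; rewrite nth_uniq ?sl // => /eqP; exact: val_inj.
exists (perm finj); apply: (@eq_from_nth _ 0); first by rewrite size_lst sl.
move=> i; rewrite size_lst => im.
by rewrite -[i]/(nat_of_ord (Ordinal im)) nth_lst permE.
Qed.


Lemma last_m (l : seq nat) m : size l = m -> 0 < m -> last m l = nth 0 l m.-1.
Proof. by move=> <-; rewrite nth_last; case: l. Qed.

Lemma card_eq m v : 0 < m ->
  #|[set s : 'S_m | [&& alternating s, avoids231 s &
      [exists l : 'I_m, (val l == m.-1) && (val (s l) == v)]]]| = Lc m v.
Proof.
move=> m0.
rewrite /Lc -size_filter -(size_image (@lst m)).
apply: perm_size; apply: uniq_perm.
- by rewrite map_inj_uniq ?enum_uniq //; exact: lst_inj.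
- exact: filter_uniq (gen_uniq m).
move=> l; rewrite mem_filter; apply/imageP/andP.
  case=> s; rewrite inE => /and3P [ha hv /existsP [l0 /andP [/eqP e0 /eqP e1]]] ->.
  split; last by apply/gen_spec; apply: valid_lst.
  by rewrite (last_m (size_lst s) m0) -e0 nth_lst e1.
case=> /eqP lv /gen_spec vl; have [s es] := valid_ex vl.
exists s => //; rewrite inE; apply/and3P; split.
- by apply/alt_iff; rewrite es; case: vl.
- by apply/av_iff; rewrite es; case: vl.
- have mm : m.-1 < m by rewrite ltn_predL.
  apply/existsP; exists (Ordinal mm).
  rewrite /= eqxx /= -(nth_lst s (Ordinal mm)) /= es.
  by rewrite -last_m ?lv //; case: vl.
Qed.

Import GRing.Theory Num.Theory.

Theorem proposition5p8 (n k : nat) (hn : (1 <= n)%N) (hk : (k <= n - 1)%N) :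
  ((a_nk n k)%:R = ((n - k)%N%:R / n%:R) * ('C(n - 1 + k, k))%:R :> rat)%R.
Proof.
have m0 : 0 < n.*2 by lia.
rewrite /a_nk card_eq //.
have h := a_closed hn hk.
rewrite mulrAC -natrM -h natrM mulfK // pnatr_eq0; lia.
Qed.
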